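(* Let $L_1$ be a fixed point of $L_1^+=(\mathbf{C}_1+\mathbf{D}_1L_1)(\mathbf{A}_1+\mathbf{B}_1L_1)^{-1}$ and let $L_2$ be defined by $L_2^\top = -(B_1 +D_1L_1)(A_1 + B_1^\top L_1)^{-1}$. Then these define the similarity transforms \[ \begin{bmatrix} I & 0 \\-L_1 & I \end{bmatrix} \begin{bmatrix} \mathbf{A}_1 & \mathbf{B}_1\\ \mathbf{C}_1 & \mathbf{D}_1 \end{bmatrix} \begin{bmatrix} I & 0 \\ L_1 & I \end{bmatrix} = \begin{bmatrix} \mathbf{H}_1 & \mathbf{B}_1 \\ 0 & \mathbf{H}_1' \end{bmatrix}, \qquad \begin{bmatrix} I & -L_2\\ 0 & I \end{bmatrix} \begin{bmatrix} \mathbf{D}_2 & \mathbf{C}_2\\ \mathbf{B}_2 & \mathbf{A}_2 \end{bmatrix} \begin{bmatrix} I & L_2 \\ 0 & I \end{bmatrix} = \begin{bmatrix} \mathbf{H}_2' & 0 \\ \mathbf{B}_2 & \mathbf{H}_2 \end{bmatrix}, \] where $\mathbf{H}_1 = \mathbf{A}_1 + \mathbf{B}_1L_1$, $\mathbf{H}_1' = \mathbf{D}_1 -L_1 \mathbf{B}_1$, $\mathbf{H}_2 = \mathbf{A}_2 + \mathbf{B}_2 L_2$, and $\mathbf{H}_2' = \mathbf{D}_2 - L_2 \mathbf{B}_2$. Furthermore, the spectrum of the $\mathbf{M}_1$-invariant subspace spanned by $[I; L_1]$ is $\operatorname{spec}(\mathbf{H}_1)$, the spectrum of the $\mathbf{M}_2$-invariant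 subspace spanned by $[L_2; I]$ is $\operatorname{spec}(\mathbf{H}_2)$, \[ \mathbf{H}_1 = \mathbf{A}_1 + \mathbf{B}_1L_1 = (D_2^\top + B_2 L_1 )^{-1}(A_1 + B_1^\top L_1 ), \qquad \mathbf{H}_2' = \mathbf{D}_2 - L_2 \mathbf{B}_2 = (A_1 + B_1^\top L_1)^{-\top}(D_2^\top + B_2L_1)^\top, \] and $\mathbf{H}_2'$ is similar to $\mathbf{H}_1^{-\top}$.
   Context: Two-player quadratic game with cost blocks $A_i\succ 0$, $B_i\in\mathbb{R}^{d_{-i}\times d_i}$, $D_i$ for player $i$ (cost $f_i=\tfrac12[x_i;x_{-i}]^\top\begin{bmatrix}A_i & B_i^\top\\ B_i& D_i\end{bmatrix}[x_i;x_{-i}]+a_i^\top x_i+b_i^\top x_{-i}$, $x_i\in\mathbb{R}^{d_i}$), affine conjectures $x_{-i}=L_ix_i+\ell_i$. $M_1=\begin{bmatrix}A_1 & B_1^\top\\ B_1 & D_1\end{bmatrix}$ and $M_2=\begin{bmatrix}D_2 & B_2\\ B_2^\top & A_2\end{bmatrix}$ are invertible; $\mathbf{M}_1=M_2^{-\top}M_1=\begin{bmatrix}\mathbf{A}_1 & \mathbf{B}_1\\ \mathbf{C}_1 & \mathbf{D}_1\end{bmatrix}$ and $\mathbf{M}_2=M_1^{-\top}M_2=\begin{bmatrix}\mathbf{D}_2 & \mathbf{C}_2\\ \mathbf{B}_2 & \mathbf{A}_2\end{bmatrix}$. The fixed-point update for $L_1$ is the composite best-response conjecture update; $L_2$ is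 player 2's consistent conjecture given $L_1$ (assuming $A_1 + B_1^\top L_1$ invertible). $I$ denotes the identity matrix of appropriate size. *)

(* Defs.v *)
From HB Require Import structures.
From mathcomp Require Import all_boot all_order all_algebra.
Set Implicit Arguments. Unset Strict Implicit. Unset Printing Implicit Defensive.
Import Order.TTheory GRing.Theory Num.Theory.
Local Open Scope ring_scope.

Definition posdef (R : realFieldType) (n : nat) (A : 'M[R]_n) : Prop :=
  A^T = A /\ forall x : 'cV[R]_n, x != 0 -> 0 < (x^T *m A *m x) 0 0.

(* X spans an M-invariant subspace and the spectrum of M restricted to that
   subspace is given by the characteristic polynomial p: the restriction of M
   to span(X), expressed in the basis formed by the columns of X, is any K
   with M X = X K; its spectrum is the root set (with multiplicities) of
   char_poly K. *)
Definition invariant_subspace_spectrum (R : fieldType) (n k : nat)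
    (M : 'M[R]_n) (X : 'M[R]_(n, k)) (p : {poly R}) : Prop :=
  (exists K : 'M[R]_k, M *m X = X *m K) /\
  (forall K : 'M[R]_k, M *m X = X *m K -> char_poly K = p).

(* Main.v *)
Require Import Defs.
From HB Require Import structures.
From mathcomp Require Import all_boot all_order all_algebra.
Import Order.TTheory GRing.Theory Num.Theory.
Local Open Scope ring_scope.

Theorem proposition4 (R : realFieldType) (d1 d2 : nat)
  (A1 : 'M[R]_d1) (B1 : 'M[R]_(d2, d1)) (D1 : 'M[R]_d2)
  (A2 : 'M[R]_d2) (B2 : 'M[R]_(d1, d2)) (D2 : 'M[R]_d1)
  (L1 : 'M[R]_(d2, d1)) (L2 : 'M[R]_(d1, d2)) :
  let M1 : 'M[R]_(d1 + d2) := block_mx A1 B1^T B1 D1 in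
  let M2 : 'M[R]_(d1 + d2) := block_mx D2 B2 B2^T A2 in
  let bM1 := (invmx M2)^T *m M1 in
  let bM2 := (invmx M1)^T *m M2 in
  let bA1 : 'M[R]_(d1, d1) := ulsubmx bM1 in
  let bB1 : 'M[R]_(d1, d2) := ursubmx bM1 in
  let bC1 : 'M[R]_(d2, d1) := dlsubmx bM1 in
  let bD1 : 'M[R]_(d2, d2) := drsubmx bM1 in
  let bD2 : 'M[R]_(d1, d1) := ulsubmx bM2 in
  let bC2 : 'M[R]_(d1, d2) := ursubmx bM2 in
  let bB2 : 'M[R]_(d2, d1) := dlsubmx bM2 in
  let bA2 : 'M[R]_(d2, d2) := drsubmx bM2 in
  let H1 := bA1 + bB1 *m L1 in
  let H1' := bD1 - L1 *m bB1 in
  let H2 := bA2 + bB2 *m L2 in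
  let H2' := bD2 - L2 *m bB2 in
  posdef A1 -> posdef A2 ->
  M1 \in unitmx -> M2 \in unitmx ->
  (A1 + B1^T *m L1) \in unitmx ->
  (* L1 is a fixed point of L1^+ = (C1 + D1 L1)(A1 + B1 L1)^{-1} *)
  H1 \in unitmx ->
  L1 = (bC1 + bD1 *m L1) *m invmx H1 ->
  (* definition of L2 *)
  L2^T = - ((B1 + D1 *m L1) *m invmx (A1 + B1^T *m L1)) ->
  [/\ block_mx 1%:M 0 (- L1) 1%:M *m block_mx bA1 bB1 bC1 bD1
        *m block_mx 1%:M 0 L1 1%:M = block_mx H1 bB1 0 H1',
      block_mx 1%:M (- L2) 0 1%:M *m block_mx bD2 bC2 bB2 bA2
        *m block_mx 1%:M L2 0 1%:M = block_mx H2' 0 bB2 H2,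
      invariant_subspace_spectrum bM1 (col_mx 1%:M L1) (char_poly H1),
      invariant_subspace_spectrum bM2 (col_mx L2 1%:M) (char_poly H2) &
      [/\ (D2^T + B2 *m L1) \in unitmx /\
        H1 = invmx (D2^T + B2 *m L1) *m (A1 + B1^T *m L1),
      H2' = (invmx (A1 + B1^T *m L1))^T *m (D2^T + B2 *m L1)^T &
      exists2 P : 'M[R]_d1, P \in unitmx & H2' = P *m (invmx H1)^T *m invmx P]].
Proof.
Proof.
have zid1 (V : zmodType) (x c y d : V) : -x + c + (-y + d) = c + d - (x + y).
  by rewrite addrACA addrC opprD.
have zid2 (V : zmodType) (d y c x : V) : d + -y + (c + -x) = d + c - (x + y).
  by rewrite addrACA opprD (addrC (-x)).
move=> M1 M2 bM1 bM2 bA1 bB1 bC1 bD1 bD2 bC2 bB2 bA2 H1 H1' H2 H2'.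
move=> _ _ uM1 uM2 uG uH1 fix1 defL2.
set G := A1 + B1^T *m L1.
set F := D2^T + B2 *m L1.
set X1 : 'M[R]_(d1 + d2, d1) := col_mx 1%:M L1.
set Y2 : 'M[R]_(d1 + d2, d2) := col_mx L2 1%:M.
have eM1 : bM1 = block_mx bA1 bB1 bC1 bD1 by rewrite /bA1 /bB1 /bC1 /bD1 submxK.
have eM2 : bM2 = block_mx bD2 bC2 bB2 bA2 by rewrite /bD2 /bC2 /bB2 /bA2 submxK.
have uM1t : M1^T \in unitmx by rewrite unitmx_tr.
have uM2t : M2^T \in unitmx by rewrite unitmx_tr.
have F1 : M2^T *m bM1 = M1 by rewrite /bM1 trmx_inv mulKVmx.
have F2 : M1^T *m bM2 = M2 by rewrite /bM2 trmx_inv mulKVmx.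
have LH1 : L1 *m H1 = bC1 + bD1 *m L1 by rewrite {1}fix1 mulmxKV.
have inv1 : bM1 *m X1 = X1 *m H1.
  by rewrite eM1 /X1 mul_block_col mul_col_mx !mulmx1 mul1mx LH1.
have MX1 : M1 *m X1 = M2^T *m X1 *m H1.
  by rewrite -F1 -mulmxA inv1 mulmxA.
have orth1 : Y2^T *m M1 *m X1 = 0.
  rewrite -mulmxA /M1 /X1 /Y2 mul_block_col tr_col_mx mul_row_col.
  by rewrite trmx1 !mulmx1 mul1mx defL2 mulNmx mulmxKV // addNr.
have o2 : Y2^T *m M2^T *m X1 = 0.
  have h : Y2^T *m M2^T *m X1 *m H1 = 0 by rewrite -orth1 -!mulmxA MX1 -!mulmxA.
  by move/(congr1 (mulmx^~ (invmx H1))): h; rewrite mulmxK // mul0mx.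
have orth2 : X1^T *m M2 *m Y2 = 0.
  by move/(congr1 trmx): o2; rewrite !trmx_mul !trmxK trmx0 mulmxA.
have orth3 : X1^T *m M1^T *m Y2 = 0.
  by move/(congr1 trmx): orth1; rewrite !trmx_mul !trmxK trmx0 mulmxA.
set Z : 'M[R]_(d1 + d2, d2) := col_mx (- L1^T) 1%:M.
have kern : forall k (V : 'M[R]_(d1 + d2, k)), X1^T *m V = 0 -> V = Z *m dsubmx V.
  move=> k V h; rewrite -[V]vsubmxK in h.
  rewrite /X1 tr_col_mx trmx1 mul_row_col mul1mx in h.
  rewrite -{1}[V]vsubmxK /Z mul_col_mx mul1mx mulNmx; congr col_mx.
  by apply/eqP; rewrite -addr_eq0 h.
set S := dsubmx (M1^T *m Y2).
set T := dsubmx (M2 *m Y2).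
have eS : M1^T *m Y2 = Z *m S by apply: kern; rewrite mulmxA.
have eT : M2 *m Y2 = Z *m T by apply: kern; rewrite mulmxA.
have uS : S \in unitmx.
  have h : Y2 = (invmx M1^T *m Z) *m S by rewrite -mulmxA -eS mulKmx.
  rewrite -[invmx M1^T *m Z]vsubmxK mul_col_mx in h.
  case/eq_col_mx: h => _ h.
  by case: (mulmx1_unit (esym h)).
set K := invmx S *m T.
have inv2 : bM2 *m Y2 = Y2 *m K.
  rewrite -[bM2 *m Y2](mulKmx uM1t) (mulmxA M1^T) F2 eT -[T](mulKVmx uS).
  by rewrite (mulmxA Z) -eS -(mulmxA M1^T) mulKmx.
have [top2 eK] : bD2 *m L2 + bC2 = L2 *m H2 /\ K = H2.
  move: (inv2); rewrite eM2 /Y2 mul_block_col mul_col_mx.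
  case/eq_col_mx; rewrite mul1mx !mulmx1 => -> <-.
  by rewrite addrC.
split.
- rewrite !mulmx_block !mul1mx !mul0mx !mulmx1 !mulmx0 !addr0 !add0r.
  congr block_mx; last by rewrite mulNmx addrC.
  by rewrite mulmxDl !mulNmx -mulmxA zid1 -mulmxDr LH1 subrr.
- rewrite !mulmx_block !mul1mx !mul0mx !mulmx1 !mulmx0 !addr0 !add0r.
  congr block_mx; first by rewrite mulNmx.
  by rewrite mulmxDl !mulNmx -mulmxA zid2 -mulmxDr top2 subrr.
  by rewrite addrC.
- split; first by exists H1.
  move=> K' h; congr char_poly; move: h; rewrite inv1 /X1 !mul_col_mx.
  by case/eq_col_mx; rewrite !mul1mx => ->.
- split; first by exists H2; rewrite -eK.
  move=> K' h; congr char_poly; move: h; rewrite inv2 eK /Y2 !mul_col_mx.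
  by case/eq_col_mx => _; rewrite !mul1mx => ->.
have GFH : G = F *m H1.
  move: MX1; rewrite /M1 /M2 /X1 tr_block_mx trmxK !mul_block_col mul_col_mx !mulmx1.
  by case/eq_col_mx.
have uF : F \in unitmx by have : G \in unitmx := uG; rewrite GFH unitmx_mul => /andP[].
have eH1 : H1 = invmx F *m G by rewrite GFH mulKmx.
set E : 'M[R]_(d1 + d2, d1) := col_mx 1%:M 0.
have eE : bM2 *m E = E *m H2' + Y2 *m bB2.
  rewrite eM2 /E /Y2 mul_block_col !mul_col_mx !mulmx1 !mulmx0 !addr0 mul0mx mul1mx.
  by rewrite add_col_mx add0r mul1mx subrK.
have h : X1^T *m M2 *m E = X1^T *m M1^T *m E *m H2'.
  rewrite -F2 -[X1^T *m (M1^T *m bM2) *m E]mulmxA -(mulmxA M1^T) eE.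
  by rewrite !mulmxDr !mulmxA orth3 mul0mx addr0.
have eFt : X1^T *m M2 *m E = F^T.
  rewrite /X1 /M2 /E tr_col_mx trmx1 mul_row_block mul_row_col.
  by rewrite !mul1mx mulmx1 mulmx0 addr0 /F raddfD /= trmxK trmx_mul.
have eGt : X1^T *m M1^T *m E = G^T.
  rewrite /X1 /M1 /E tr_col_mx trmx1 tr_block_mx mul_row_block mul_row_col.
  by rewrite !mul1mx mulmx1 mulmx0 addr0 /G raddfD /= trmx_mul.
have eH2' : H2' = (invmx G)^T *m F^T.
  by rewrite -eFt h eGt trmx_inv mulKmx // unitmx_tr.
have iH1 : invmx H1 = invmx G *m F.
  have hh : H1 *m (invmx G *m F) = 1%:M.
    by rewrite {1}eH1 -mulmxA (mulmxA G) mulmxV // mul1mx mulVmx.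
  by rewrite -[RHS](mulKmx uH1) hh mulmx1.
split => //.
exists (invmx G)^T; first by rewrite trmx_inv unitmx_inv unitmx_tr.
by rewrite eH2' iH1 trmx_mul !trmx_inv invmxK mulmxA mulmxKV // unitmx_tr.
Qed.
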